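(* For every word $\omega\in[n]^*$, the set $B_\omega\subseteq\mathbb{Z}^n$ is connected, where a subset of $\mathbb{Z}^n$ is regarded as a graph by joining two of its elements by an edge iff their Euclidean distance is $1$.
   Context: Let $[n]=\{1,\dots,n\}$, $e_1,\dots,e_n$ the standard basis of $\mathbb{Z}^n$; $\varepsilon$ is the empty word, $*$ concatenation. For words $\omega$ over $[n]$ define recursively $\delta^i_\omega\in\mathbb{Z}^n$: $\delta^i_\varepsilon=e_i$; $\delta^j_{\omega*j}=\delta^j_\omega$, $\delta^i_{\omega*j}=\delta^i_\omega-\delta^j_\omega$ for $i\ne j$. Let $B_\varepsilon=\{0\}$ and $B_{\omega*j}=B_\omega+\{0,\delta^j_\omega\}$ (Minkowski sum). *)

(* Defs.v *)
From mathcomp Require Import all_boot all_order all_algebra.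
Set Implicit Arguments. Unset Strict Implicit. Unset Printing Implicit Defensive.
Import Order.TTheory GRing.Theory Num.Theory.
Local Open Scope ring_scope.

(* Points of Z^n, coordinates indexed by 'I_n = {0,...,n-1} (stands for [n]). *)
Definition vec (n : nat) := {ffun 'I_n -> int}.

Definition evec n (i : 'I_n) : vec n := [ffun k => (k == i)%:Z].

(* One step of the recursion for delta: from (delta^i_w)_i to (delta^i_{w*j})_i *)
Definition dstep n (D : 'I_n -> vec n) (j : 'I_n) : 'I_n -> vec n :=
  fun i => if i == j then D j else D i - D j.

(* delta w i = delta^i_w ; words are seq 'I_n, w*j is rcons w j *)
Definition delta n (w : seq 'I_n) : 'I_n -> vec n := foldl (@dstep n) (@evec n) w.

(* B_w as a (boolean) subset of Z^n:
   B_eps = {0},  B_{w*j} = B_w + {0, delta^j_w}. *)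
Fixpoint Bset_rev n (rw : seq 'I_n) : pred (vec n) :=
  match rw with
  | [::] => fun x => x == 0
  | j :: rw' => fun x => Bset_rev rw' x || Bset_rev rw' (x - delta (rev rw') j)
  end.
Definition Bset n (w : seq 'I_n) : pred (vec n) := Bset_rev (rev w).

Definition adj n (x y : vec n) : bool := \sum_i (x i - y i) ^+ 2 == 1.

Definition connected_set n (S : pred (vec n)) : Prop :=
  forall x y, S x -> S y ->
    exists p : seq (vec n), [/\ all S p, path (@adj n) x p & last x p = y].

(* Main.v *)
Require Import Defs.
From mathcomp Require Import all_boot all_order all_algebra.
Import Order.TTheory GRing.Theory Num.Theory.
Local Open Scope ring_scope.
Set Implicit Arguments. Unset Strict Implicit.

Lemma BsetS n (w : seq 'I_n) j z :
  Bset (rcons w j) z = Bset w z || Bset w (z - delta w j).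
Proof. by rewrite /Bset rev_rcons /= revK. Qed.

Lemma deltaS n (w : seq 'I_n) j : delta (rcons w j) = dstep (delta w) j.
Proof. by rewrite /delta foldl_rcons. Qed.

Lemma inv n (w : seq 'I_n) : forall i, exists x,
  Bset w x && Bset w (x + delta w i - evec i).
Proof.
elim/last_ind: w => [|w j IH] i.
  by exists 0; rewrite /Bset /delta /= add0r subrr eqxx.
rewrite deltaS /dstep.
have [->|ne] := eqVneq i j.
  rewrite /=; have [x /andP[h1 h2]] := IH j.
  by exists x; rewrite !BsetS h1 h2.
rewrite /=; have [x /andP[h1 h2]] := IH i.
exists (x + delta w j); rewrite !BsetS addrK h1 orbT /=.
by rewrite (addrC (delta w i) (- delta w j)) addrA addrK h2.
Qed.

Lemma adj_tr n (x y d : vec n) : adj (x + d) (y + d) = adj x y.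
Proof.
rewrite /adj; congr (_ == _); apply: eq_bigr => i _.
by rewrite !ffunE opprD addrACA subrr addr0.
Qed.

Lemma adj_sym n (x y : vec n) : adj x y = adj y x.
Proof.
rewrite /adj; congr (_ == _); apply: eq_bigr => i _.
by rewrite -sqrrN opprB.
Qed.

Lemma adj_e n (z : vec n) j : adj z (z - evec j).
Proof.
rewrite /adj (bigD1 j) //= big1 ?addr0.
  by rewrite !ffunE opprB addrC subrK eqxx.
by move=> i ne; rewrite !ffunE opprB addrC subrK (negbTE ne).
Qed.

Definition reach n (S : pred (vec n)) x y :=
  exists p : seq (vec n), [/\ all S p, path (@adj n) x p & last x p = y].

Lemma reach_trans n (S : pred (vec n)) x y z :
  reach S x y -> reach S y z -> reach S x z.
Proof.
move=> [p [a1 p1 l1]] [q [a2 p2 l2]]; exists (p ++ q).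
by rewrite all_cat a1 a2 cat_path p1 l1 p2 last_cat l1 l2.
Qed.

Lemma reach_tr n (S : pred (vec n)) (T : pred (vec n)) d x y :
  (forall z, S z -> T (z + d)) -> reach S x y -> reach T (x + d) (y + d).
Proof.
move=> hST [p [a1 p1 l1]]; exists (map (fun z => z + d) p); split.
- by rewrite all_map; apply/allP => z /(allP a1) /hST.
- elim: p x a1 p1 {l1} => //= z p IHp x /andP[_ a] /andP[h1 h2].
  by rewrite adj_tr h1 IHp.
- by rewrite (last_map (fun z => z + d)) l1.
Qed.

Lemma reach_mono n (S T : pred (vec n)) x y :
  (forall z, S z -> T z) -> reach S x y -> reach T x y.
Proof.
move=> h [p [a1 p1 l1]]; exists p; split => //.
by apply/allP => z /(allP a1) /h.
Qed.

Theorem lemma3p5 (n : nat) (w : seq 'I_n) : connected_set (Bset w).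
Proof.
elim/last_ind: w => [|w j IH].
  move=> x y; rewrite /Bset /= => /eqP -> /eqP ->; by exists [::].
have [a /andP[ha hb]] := inv w j.
set S' := Bset (rcons w j).
set z0 := a + delta w j - evec j.
have Sin : forall z, Bset w z -> S' z by move=> z hz; rewrite /S' BsetS hz.
have Sin2 : forall z, Bset w z -> S' (z + delta w j).
  by move=> z hz; rewrite /S' BsetS addrK hz orbT.
have hz0 : S' z0 by apply: Sin.
have hd : S' (a + delta w j) by apply: Sin2.
have toz0 : forall x, S' x -> reach S' x z0 /\ reach S' z0 x.
  move=> x; rewrite /S' BsetS => /orP[hx|hx].
    by split; apply: (reach_mono Sin); apply: IH.
  have e1 : reach S' (a + delta w j) z0.
    by exists [:: z0]; rewrite /= hz0 adj_e.
  have e2 : reach S' z0 (a + delta w j).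
    by exists [:: a + delta w j]; rewrite /= hd adj_sym adj_e.
  have := subrK (delta w j) x => ex.
  split.
  - apply: reach_trans e1; rewrite -ex.
    by apply: (reach_tr Sin2); apply: IH.
  - apply: (reach_trans e2); rewrite -ex.
    by apply: (reach_tr Sin2); apply: IH.
move=> x y hx hy.
have [h1 _] := toz0 x hx; have [_ h2] := toz0 y hy.
exact: reach_trans h1 h2.
Qed.
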